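(* The reduction relation $\to_{{\tt j}/{\tt o}}$ on $\lambda j$-terms is strongly normalizing (terminating).
   Context: $\lambda j$-terms are generated by $t,u::= x\mid \lambda x.t\mid t\,u\mid t[x/u]$; $\lambda x.t$ and $t[x/u]$ bind $x$ in $t$ (not in $u$), and terms are considered modulo $\alpha$-conversion. $\mathrm{fv}(t)$ is the set of free variables, $t\{x/u\}$ is capture-avoiding meta-level substitution, and $|t|_x$ is the number of free occurrences of $x$ in $t$. If $|t|_x=n\ge2$, $t_{[y]_x}$ denotes any term obtained from $t$ by replacing $k$ of the free occurrences of $x$ by a fresh variable $y$, for some $1\le k\le n-1$. $\to_{\tt j}$ is the closure under all contexts of: $({\tt w})$ $t[x/u]\to t$ if $|t|_x=0$; $({\tt d})$ $t[x/u]\to t\{x/u\}$ if $|t|_x=1$; $({\tt c})$ $t[x/u]\to t_{[y]_x}[x/u][y/u]$ if $|t|_x\ge2$, $y$ fresh. $\equiv_{\tt o}$ is the smallest equivalence closed under contexts containing $t[x/s][y/v]\sim t[y/v][x/s]$ if $x\notin\mathrm{fv}(v)$ and $y\notin\mathrm{fv}(s)$; $\lambda y.(t[x/s])\sim(\lambda y.t)[x/s]$ if $y\notin\mathrm{fv}(s)$; and $t[x/s]\,v\sim(t\,v)[x/s]$ if $x\notin\mathrm{fv}(v)$. $t\to_{{\tt j}/{\tt o}}u$ iff $t\equiv_{\tt o}t'\to_{\tt j}u'\equiv_{\tt o}u$ for some $t',u'$. *)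

(* Defs.v *)
(* lambda-j terms in de Bruijn representation (terms modulo
   alpha-conversion). *)
From Stdlib Require Import Arith Relations.

Inductive term : Type :=
| Var : nat -> term
| Lam : term -> term
| App : term -> term -> term
| Sub : term -> term -> term.   (* Sub t u = t[x/u] : binds index 0 in t, not in u *)

Fixpoint lift (d : nat) (t : term) : term :=
  match t with
  | Var n => if n <? d then Var n else Var (S n)
  | Lam t => Lam (lift (S d) t)
  | App t u => App (lift d t) (lift d u)
  | Sub t u => Sub (lift (S d) t) (lift d u)
  end.

Fixpoint swap (d : nat) (t : term) : term :=
  match t with
  | Var n => if n =? d then Var (S d) else if n =? S d then Var d else Var n
  | Lam t => Lam (swap (S d) t)
  | App t u => App (swap d t) (swap d u)
  | Sub t u => Sub (swap (S d) t) (swap d u)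
  end.

(* capture-avoiding meta substitution: subst k u t = t{k/u},
   indices above k are decremented (the binder of k disappears) *)
Fixpoint subst (k : nat) (u : term) (t : term) : term :=
  match t with
  | Var n => if n <? k then Var n else if n =? k then u else Var (pred n)
  | Lam t => Lam (subst (S k) (lift 0 u) t)
  | App t1 t2 => App (subst k u t1) (subst k u t2)
  | Sub t1 t2 => Sub (subst (S k) (lift 0 u) t1) (subst k u t2)
  end.

Fixpoint occ (k : nat) (t : term) : nat :=
  match t with
  | Var n => if n =? k then 1 else 0
  | Lam t => occ (S k) t
  | App t u => occ k t + occ k u
  | Sub t u => occ (S k) t + occ k u
  end.

(* split d t t' : t' is obtained from t by inserting a fresh binder position
   at d+1 (free indices > d are shifted) and renaming SOME occurrences of the
   free index d into the fresh index d+1.  Together with side conditions on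
   the counts this represents t_{[y]_x}. *)
Inductive split : nat -> term -> term -> Prop :=
| split_keep : forall d, split d (Var d) (Var d)
| split_ren  : forall d, split d (Var d) (Var (S d))
| split_lt   : forall d n, n < d -> split d (Var n) (Var n)
| split_gt   : forall d n, d < n -> split d (Var n) (Var (S n))
| split_lam  : forall d t t', split (S d) t t' -> split d (Lam t) (Lam t')
| split_app  : forall d t t' u u', split d t t' -> split d u u' ->
                 split d (App t u) (App t' u')
| split_sub  : forall d t t' u u', split (S d) t t' -> split d u u' ->
                 split d (Sub t u) (Sub t' u').

Inductive j_root : term -> term -> Prop :=
| j_w : forall t u, occ 0 t = 0 -> j_root (Sub t u) (subst 0 u t)
| j_d : forall t u, occ 0 t = 1 -> j_root (Sub t u) (subst 0 u t)
| j_c : forall t t' u, 2 <= occ 0 t -> split 0 t t' ->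
          1 <= occ 0 t' -> 1 <= occ 1 t' ->
          (* t'[x/u][y/u] : inner Sub binds x (index 0), outer binds y (index 1) *)
          j_root (Sub t u) (Sub (Sub t' (lift 0 u)) u).

Inductive o_root : term -> term -> Prop :=
| o_ss : forall t s v,   (* t[x/s][y/v] ~ t[y/v][x/s], y notin fv(s) *)
    o_root (Sub (Sub t (lift 0 s)) v) (Sub (Sub (swap 0 t) (lift 0 v)) s)
| o_ls : forall t s,     (* \y.(t[x/s]) ~ (\y.t)[x/s], y notin fv(s) *)
    o_root (Lam (Sub t (lift 0 s))) (Sub (Lam (swap 0 t)) s)
| o_as : forall t s v,   (* t[x/s] v ~ (t v)[x/s], x notin fv(v) *)
    o_root (App (Sub t s) v) (Sub (App t (lift 0 v)) s).

Inductive ctx (R : term -> term -> Prop) : term -> term -> Prop :=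
| ctx_root : forall t u, R t u -> ctx R t u
| ctx_lam  : forall t u, ctx R t u -> ctx R (Lam t) (Lam u)
| ctx_appl : forall t u v, ctx R t u -> ctx R (App t v) (App u v)
| ctx_appr : forall t u v, ctx R t u -> ctx R (App v t) (App v u)
| ctx_subl : forall t u v, ctx R t u -> ctx R (Sub t v) (Sub u v)
| ctx_subr : forall t u v, ctx R t u -> ctx R (Sub v t) (Sub v u).

Definition j_step : relation term := ctx j_root.

Definition o_equiv : relation term := clos_refl_sym_trans term (ctx o_root).

Definition jo_step (t u : term) : Prop :=
  exists t' u', o_equiv t t' /\ j_step t' u' /\ o_equiv u' u.

Definition strongly_normalizing (R : relation term) : Prop :=
  well_founded (fun u t => R t u).

(* Main.v *)
Require Import Defs.
From Stdlib Require Import Arith Lia Relations Wellfounded.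

Fixpoint m (k : nat) (t : term) : nat :=
  match t with
  | Var n => if n =? k then 1 else 0
  | Lam t => m (S k) t
  | App t u => m k t + m k u
  | Sub t u => m (S k) t + Nat.max 1 (m 0 t) * m k u
  end.

Fixpoint W (t : term) : nat :=
  match t with
  | Var _ => 0
  | Lam t => W t
  | App t u => W t + W u
  | Sub t u => W t + Nat.max 1 (m 0 t) * W u + m 0 t * m 0 t + 1
  end.

Ltac crush :=
  repeat (cbn -[Nat.eqb Nat.ltb Nat.max] in *; match goal with
  | |- context[?a =? ?b] => destruct (Nat.eqb_spec a b)
  | |- context[?a <? ?b] => destruct (Nat.ltb_spec a b)
  | H : context[?a =? ?b] |- _ => destruct (Nat.eqb_spec a b)
  | H : context[?a <? ?b] |- _ => destruct (Nat.ltb_spec a b)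
  end); cbn -[Nat.eqb Nat.ltb Nat.max] in *; try lia.

Lemma lift_m_lt : forall t d k, k < d -> m k (lift d t) = m k t.
Proof.
  induction t; intros d k H; cbn -[Nat.eqb Nat.ltb Nat.max].
  - crush.
  - apply IHt; lia.
  - rewrite IHt1, IHt2; auto.
  - rewrite IHt1, IHt2, (IHt1 (S d) 0); auto; lia.
Qed.

Lemma lift_m_ge : forall t d k, d <= k -> m (S k) (lift d t) = m k t.
Proof.
  induction t; intros d k H; cbn -[Nat.eqb Nat.ltb Nat.max].
  - crush.
  - apply IHt; lia.
  - rewrite IHt1, IHt2; auto.
  - rewrite IHt1, IHt2, lift_m_lt; auto; lia.
Qed.

Lemma lift_m_eq : forall t d, m d (lift d t) = 0.
Proof.
  induction t; intros d; cbn -[Nat.eqb Nat.ltb Nat.max].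
  - crush.
  - apply IHt.
  - rewrite IHt1, IHt2; auto.
  - rewrite IHt1, IHt2; lia.
Qed.

Lemma lift_W : forall t d, W (lift d t) = W t.
Proof.
  induction t; intros d; cbn -[Nat.eqb Nat.ltb Nat.max]; auto.
  - crush.
  - rewrite IHt1, IHt2, lift_m_lt; auto; lia.
Qed.

Definition sw (d k : nat) := if k =? d then S d else if k =? S d then d else k.

Lemma swap_m : forall t d k, m k (swap d t) = m (sw d k) t.
Proof.
  induction t; intros d k; cbn -[Nat.eqb Nat.ltb Nat.max].
  - unfold sw; crush.
  - rewrite IHt. f_equal. unfold sw; crush.
  - rewrite IHt1, IHt2; auto.
  - rewrite IHt1, IHt2, IHt1. f_equal. f_equal. unfold sw; crush.
    all: try (f_equal; f_equal; f_equal; unfold sw; crush).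
Qed.

Lemma swap_W : forall t d, W (swap d t) = W t.
Proof.
  induction t; intros d; cbn -[Nat.eqb Nat.ltb Nat.max]; auto.
  - crush.
  - rewrite IHt1, IHt2, swap_m. replace (sw (S d) 0) with 0 by (unfold sw; crush). reflexivity.
Qed.

Lemma subst_m : forall t j u k,
  m k (subst j u t) = (if k <? j then m k t else m (S k) t) + m j t * m k u.
Proof.
  induction t; intros j u k; cbn -[Nat.eqb Nat.ltb Nat.max].
  - crush.
  - rewrite IHt, lift_m_ge by lia. crush.
  - rewrite IHt1, IHt2. crush; ring.
  - rewrite IHt1, IHt2, IHt1, lift_m_ge, lift_m_eq by lia. cbn -[Nat.eqb Nat.ltb Nat.max].
    rewrite Nat.mul_0_r, Nat.add_0_r.
    crush; ring.
Qed.

Lemma subst_W : forall t j u, W (subst j u t) = W t + m j t * W u.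
Proof.
  induction t; intros j u; cbn -[Nat.eqb Nat.ltb Nat.max].
  - crush.
  - rewrite IHt, lift_W; auto.
  - rewrite IHt1, IHt2. ring.
  - rewrite IHt1, IHt2, subst_m, lift_m_eq, lift_W. change (0 <? S j) with true. cbn iota.
    rewrite !Nat.mul_0_r, !Nat.add_0_r. ring.
Qed.

Lemma split_prop : forall d t t', split d t t' ->
  (forall k, k < d -> m k t' = m k t) /\
  (forall k, d < k -> m (S k) t' = m k t) /\
  m d t' + m (S d) t' = m d t /\ W t' = W t.
Proof.
  induction 1; cbn -[Nat.eqb Nat.ltb Nat.max].
  - repeat split; intros; crush.
  - repeat split; intros; crush.
  - repeat split; intros; crush.
  - repeat split; intros; crush.
  - destruct IHsplit as (A & B & C & D).
    repeat split; intros; auto.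
    + apply A; lia.
    + apply B; lia.
  - destruct IHsplit1 as (A & B & C & D); destruct IHsplit2 as (A' & B' & C' & D').
    repeat split; intros.
    + rewrite A, A'; auto.
    + rewrite B, B'; auto.
    + lia.
    + lia.
  - destruct IHsplit1 as (A & B & C & D); destruct IHsplit2 as (A' & B' & C' & D').
    assert (E : m 0 t' = m 0 t) by (apply A; lia).
    repeat split; intros.
    + rewrite A, A', E by lia; auto.
    + rewrite B, B', E by lia; auto.
    + rewrite E, <- C', <- C. ring.
    + rewrite D, D', E; auto.
Qed.

Lemma mul_max1 : forall a x, x <= Nat.max 1 a * x.
Proof. intros. destruct a; cbn -[Nat.eqb Nat.ltb Nat.max]; lia. Qed.

Lemma occ_m : forall t k, occ k t <= m k t.
Proof.
  induction t; intros k; cbn -[Nat.eqb Nat.ltb Nat.max].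
  - crush.
  - apply IHt.
  - specialize (IHt1 k); specialize (IHt2 k); lia.
  - specialize (IHt1 (S k)); specialize (IHt2 k).
    pose proof (mul_max1 (m 0 t1) (m k t2)); lia.
Qed.

Lemma occ0_m : forall t k, occ k t = 0 -> m k t = 0.
Proof.
  induction t; intros k H; cbn -[Nat.eqb Nat.ltb Nat.max] in *.
  - crush.
  - auto.
  - rewrite IHt1, IHt2; lia.
  - rewrite IHt1, IHt2; lia.
Qed.

Lemma max1_ge1 : forall a, 1 <= a -> Nat.max 1 a = a.
Proof. intros; lia. Qed.

Lemma o_root_inv : forall t u, o_root t u -> (forall k, m k t = m k u) /\ W t = W u.
Proof.
  induction 1; cbn -[Nat.eqb Nat.ltb Nat.max]; split; intros;
  repeat rewrite ?swap_m, ?swap_W, ?lift_m_eq, ?lift_W, ?(lift_m_ge _ 0) by lia;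
  unfold sw; cbn -[Nat.max]; rewrite ?Nat.mul_0_r, ?Nat.add_0_r; ring.
Qed.

Lemma ctx_o_inv : forall t u, ctx o_root t u -> (forall k, m k t = m k u) /\ W t = W u.
Proof.
  induction 1.
  - apply o_root_inv; auto.
  - destruct IHctx as [A B]; cbn -[Nat.eqb Nat.ltb Nat.max]; split; auto.
  - destruct IHctx as [A B]; cbn -[Nat.eqb Nat.ltb Nat.max]; split; intros; rewrite ?A, ?B; auto.
  - destruct IHctx as [A B]; cbn -[Nat.eqb Nat.ltb Nat.max]; split; intros; rewrite ?A, ?B; auto.
  - destruct IHctx as [A B]; cbn -[Nat.eqb Nat.ltb Nat.max]; split; intros; rewrite ?A, ?B; auto.
  - destruct IHctx as [A B]; cbn -[Nat.eqb Nat.ltb Nat.max]; split; intros; rewrite ?A, ?B; auto.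
Qed.

Lemma o_equiv_inv : forall t u, o_equiv t u -> (forall k, m k t = m k u) /\ W t = W u.
Proof.
  induction 1.
  - apply ctx_o_inv; auto.
  - split; auto.
  - destruct IHclos_refl_sym_trans as [A B]; split; auto.
  - destruct IHclos_refl_sym_trans1 as [A B]; destruct IHclos_refl_sym_trans2 as [C D].
    split; intros; [rewrite A; auto | lia].
Qed.

Lemma j_root_dec : forall t u, j_root t u -> (forall k, m k u <= m k t) /\ W u < W t.
Proof.
  induction 1; cbn -[Nat.eqb Nat.ltb Nat.max].
  - apply occ0_m in H. rewrite H. split; intros.
    + rewrite subst_m, H. change (k <? 0) with false. cbn -[Nat.max]. lia.
    + rewrite subst_W, H. cbn -[Nat.eqb Nat.ltb Nat.max]. lia.
  - pose proof (occ_m t 0). rewrite H in H0.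
    rewrite max1_ge1 by lia. split; intros.
    + rewrite subst_m. change (k <? 0) with false. cbn -[Nat.max]. lia.
    + rewrite subst_W. nia.
  - destruct (split_prop _ _ _ H0) as (A & B & C & D).
    pose proof (occ_m t' 0). pose proof (occ_m t' 1).
    rewrite (max1_ge1 (m 0 t)) by lia.
    rewrite (max1_ge1 (m 0 t')) by lia.
    rewrite lift_m_eq, lift_W, Nat.mul_0_r, Nat.add_0_r.
    rewrite (max1_ge1 (m 1 t')) by lia.
    split; intros.
    + rewrite lift_m_ge by lia. rewrite B by lia. rewrite <- C. lia.
    + rewrite D, <- C. nia.
Qed.

Lemma max1_mono : forall a b, a <= b -> Nat.max 1 a <= Nat.max 1 b.
Proof. intros; lia. Qed.

Lemma ctx_j_dec : forall t u, ctx j_root t u -> (forall k, m k u <= m k t) /\ W u < W t.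
Proof.
  induction 1.
  - apply j_root_dec; auto.
  - destruct IHctx as [A B]; cbn -[Nat.eqb Nat.ltb Nat.max]; split; auto.
  - destruct IHctx as [A B]; cbn -[Nat.eqb Nat.ltb Nat.max]; split; intros; [specialize (A k)|]; lia.
  - destruct IHctx as [A B]; cbn -[Nat.eqb Nat.ltb Nat.max]; split; intros; [specialize (A k)|]; lia.
  - destruct IHctx as [A B]; cbn -[Nat.eqb Nat.ltb Nat.max]. pose proof (A 0) as A0.
    pose proof (max1_mono _ _ A0).
    split; intros.
    + specialize (A (S k)). pose proof (Nat.mul_le_mono_r _ _ (m k v) H0). lia.
    + pose proof (Nat.mul_le_mono_r _ _ (W v) H0).
      pose proof (Nat.mul_le_mono _ _ _ _ A0 A0). lia.
  - destruct IHctx as [A B]; cbn -[Nat.eqb Nat.ltb Nat.max]. split; intros.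
    + specialize (A k). pose proof (Nat.mul_le_mono_l _ _ (Nat.max 1 (m 0 v)) A). lia.
    + assert (1 <= Nat.max 1 (m 0 v)) by lia.
      pose proof (proj1 (Nat.mul_lt_mono_pos_l (Nat.max 1 (m 0 v)) _ _ ltac:(lia)) B). lia.
Qed.

Theorem lemma26 : strongly_normalizing jo_step.
Proof.
  unfold strongly_normalizing.
  apply (wf_incl _ _ (fun u t => W u < W t)).
  - intros u t (t' & u' & H1 & H2 & H3).
    apply o_equiv_inv in H1. apply o_equiv_inv in H3. apply ctx_j_dec in H2.
    destruct H1, H2, H3. lia.
  - apply (wf_inverse_image _ _ lt W). apply lt_wf.
Qed.
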